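(* Let $p$ be a prime and $V$ a vector space of dimension $d$ over $\mathbb{F}_p$. Let $G_0\le \mathrm{GL}(V)$ be a solvable group acting irreducibly and quasi-primitively on $V$, let $G=V\rtimes G_0$, and let $W$, $A$, $F$, $e$ be structure data for $G_0$ as described in the context. Then \[ \mathrm{rank}(G)\;\ge\;\left\lceil \frac{|W|^{e}-1}{\log_2(|W|)\cdot |A/F|\cdot e^2\cdot (|W|-1)}\right\rceil+1 . \]
   Context: $G=V\rtimes G_0$ is regarded as a permutation group on $V$ (translations together with the linear action of $G_0$). The rank of $G$, $\mathrm{rank}(G)$, is the number of orbits of $G_0$ on $V$, including the orbit $\{0\}$. $G_0$ is quasi-primitive on $V$: every normal subgroup of $G_0$ acts homogeneously on $V$ (the restriction of $V$ to it is a direct sum of pairwise isomorphic irreducible modules). Structure data: subgroups $Z(E)\le U\le F\le A\le G_0$, each normal in $G_0$, and a characteristic subgroup $E$ of $F$, such that: (i) $F=EU$ is a central product with $E\cap U=Z(E)$; (ii) $F/U\cong E/Z(E)$ and $E/Z(E)$ is a direct sum of completely reducible $G_0/F$-modules (action by conjugation); (iii) $E=E_1\times\cdots\times E_s$ with $E_i$ an extraspecial $q_i$-group of order $q_i^{2m_i+1}$, the $q_i$ distinct primes and $m_i\ge 1$; $e:=\prod_i q_i^{m_i}$ (so $|E/Z(E)|=e^2$), $e\mid d$ and $\gcd(p,e)=1$; (iv) $A=C_{G_0}(U)$ and $A/F$ acts faithfully on $E/Z(E)$; (v) $U$ is cyclic and acts fixed-point-freely on $W$, an irreducible $\mathbb{F}_pU$-submodule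 of $V$; (vi) $|U|$ divides $p^k-1$ for some integer $k\ge1$, and $W$ is identified with the $\mathbb{F}_p$-span of $U$, isomorphic to $\mathbb{F}_{p^k}$, so $|W|=p^k$; (vii) $|V|=|W|^{eb}$ for some positive integer $b$, so $d=bke$. (Such data exist for every finite solvable irreducible quasi-primitive linear group, by a known structure theorem.) *)

(* Defs.v *)
From Stdlib Require Import Rdefinitions Rpower.
From HB Require Import structures.
From mathcomp Require Import all_boot all_order all_algebra all_fingroup all_solvable.
From mathcomp Require Import all_field all_character.
From mathcomp Require Import Rstruct.

Set Implicit Arguments.
Unset Strict Implicit.
Unset Printing Implicit Defensive.

Import GRing.Theory Num.Theory.
Local Open Scope group_scope.

Definition mx_homogeneous (F : fieldType) (gT : finGroupType) (G : {group gT})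
    (n : nat) (rG : mx_representation F G n) : Prop :=
  inhabited (mxsemisimple rG 1%:M) /\
  forall U1 U2 : 'M[F]_n, mxsimple rG U1 -> mxsimple rG U2 -> mx_iso rG U1 U2.

Definition mx_quasi_primitive (F : fieldType) (gT : finGroupType) (G : {group gT})
    (n : nat) (rG : mx_representation F G n) : Prop :=
  forall (N : {group gT}) (sNG : N \subset G),
    (N <| G)%g -> mx_homogeneous (subg_repr rG sNG).

(* E/Z(E) is completely reducible as a G0-module (action by conjugation):
   every G0-invariant subgroup Z(E) <= H <= E has a G0-invariant complement
   modulo Z(E). *)
Definition compl_reducible_quo (gT : finGroupType) (G0 E : {group gT}) : Prop :=
  forall H : {group gT},
    'Z(E) \subset H -> H \subset E -> G0 \subset 'N(H) ->
    exists K : {group gT},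
      [/\ 'Z(E) \subset K, K \subset E, G0 \subset 'N(K),
          (H * K)%g = E & H :&: K = 'Z(E)].

(* rank of the affine group V : G0 = number of G0-orbits on V (including {0}) *)
Definition affine_rank (p : nat) (gT : finGroupType) (G0 : {group gT}) (d : nat)
    (rG : mx_representation 'F_p G0 d) : nat :=
  #|[set orbit ('MR rG)%act G0 v | v : 'rV['F_p]_d]|.

Definition log2 (x : R) : R := ln x / ln 2.

(* Main.v *)
Require Import Defs.
From Stdlib Require Import Rdefinitions Rpower.
From Stdlib Require Import Reals Lra.
From HB Require Import structures.
From mathcomp Require Import all_boot all_order all_algebra all_fingroup all_solvable.
From mathcomp Require Import all_field all_character.
From mathcomp Require Import Rstruct.
From mathcomp Require Import ring.
Import GRing.Theory Num.Theory.

Section Helpers.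
Set Implicit Arguments.
Unset Strict Implicit.
Unset Printing Implicit Defensive.
Section Core.
Local Open Scope ring_scope.
Variables (F : fieldType) (gT : finGroupType) (G0 U : {group gT}) (n : nat).
Variable (rG : mx_representation F G0 n.+1).
Variable (sUG : (U \subset G0)%g).
Local Notation rU := (subg_repr rG sUG).
Hypothesis homU : mx_homogeneous rU.
Hypothesis abU : abelian U.
Variable W : 'M[F]_n.+1.
Hypothesis simW : mxsimple rU W.
Hypothesis fpf : forall u, u \in U -> u != 1%g ->
  forall w : 'rV[F]_n.+1, (w <= W)%MS -> w *m rG u = w -> w = 0.

Lemma transport A : (A \in enveloping_algebra_mx rU)%MS -> W *m A = 0 -> A = 0.
Proof.
move=> EA WA0.
case: homU => [[ss] isoU].
case: ss => I Ui S simUi defS _.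
have Ui0 : forall i, (Ui i <= kermx A)%MS.
  move=> i; have [f uf homf defWf] := isoU _ _ simW (simUi i).
  rewrite sub_kermx -submx0 -(eqmxMr A defWf) -(hom_envelop_mxC homf EA) WA0.
  by rewrite mul0mx submx_refl.
have : (1%:M <= kermx A)%MS.
  by rewrite -defS; apply/sumsmx_subP => i _; apply: Ui0.
by rewrite sub_kermx mul1mx => /eqP.
Qed.


Local Notation E := (enveloping_algebra_mx rU).

Lemma envB A B : (A \in E)%MS -> (B \in E)%MS -> (A - B \in E)%MS.
Proof.
move=> EA EB; rewrite linearB /=; apply: addmx_sub => //.
by rewrite -scaleN1r scalemx_sub.
Qed.

Lemma env_horner x P : x \in U -> (horner_mx (rG x) P \in E)%MS.
Proof.
move=> Ux; elim/poly_ind: P => [|P c IH].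
  by rewrite rmorph0 linear0 sub0mx.
rewrite rmorphD rmorphM /= horner_mx_X horner_mx_C.
rewrite linearD /=; apply: addmx_sub.
  by apply: envelop_mxM => //; apply: (envelop_mx_id rU Ux).
by rewrite -scalemx1 linearZ /= scalemx_sub // envelop_mx1.
Qed.

Lemma rGcomm x y : x \in U -> y \in U -> rG x *m rG y = rG y *m rG x.
Proof.
move=> Ux Uy; have Gx := subsetP sUG x Ux; have Gy := subsetP sUG y Uy.
by rewrite -!repr_mxM // (centsP abU).
Qed.

Lemma unit_diff u : u \in U -> u != 1%g -> rG u - 1%:M \in unitmx.
Proof.
move=> Uu nu1; set A := rG u - 1%:M.
rewrite -row_free_unit -kermx_eq0.
have [//|nzK] := boolP (kermx A == 0).
have modK : mxmodule rU (kermx A).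
  apply/mxmoduleP => y Uy; rewrite sub_kermx -mulmxA.
  have -> : rU y *m A = A *m rU y.
    by rewrite /A mulmxBl mulmxBr mulmx1 mul1mx /= rGcomm.
  by rewrite mulmxA mulmx_ker mul0mx.
apply: (mxsimple_exists modK nzK) => -[S simS sSK]; exfalso.
have EA : (A \in E)%MS.
  by apply: envB; [apply: (envelop_mx_id rU Uu) | apply: envelop_mx1].
case: homU => _ isoU.
have [f uf homf defWf] := isoU _ _ simW simS.
have WA0 : W *m A = 0.
  apply/eqP; rewrite -submx0.
  have : (W *m f *m A <= S *m A)%MS by apply: submxMr; rewrite defWf.
  rewrite -(hom_envelop_mxC homf EA).
  move/sub_kermxP: sSK => ->; move=> /submx0null H.
  by rewrite -[W *m A](mulmxK uf) H mul0mx.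
case: simW => _ nzW _; move/negP: nzW; apply.
apply/eqP/row_matrixP => i; rewrite row0.
apply: (fpf Uu nu1 (row_sub i W)).
have := congr1 (row i) WA0; rewrite row0 row_mul /A mulmxBr mulmx1.
by move/eqP; rewrite subr_eq0 => /eqP.
Qed.


Lemma Pexists x : x \in U ->
  exists P : {poly F}, [/\ P != 0, (size P <= (\rank W).+1)%N &
                          horner_mx (rG x) P = 0].
Proof.
move=> Ux; set k := \rank W; set X := rG x.
case: (simW) => modW nzW simW'.
have [w0 w0W nzw0] := rowV0Pn nzW.
have powW : forall i, (w0 *m X ^+ i <= W)%MS.
  elim=> [|i IH]; first by rewrite expr0 mulmx1.
  rewrite exprSr mulmxA; apply: submx_trans (submxMr X IH) _.
  exact: (mxmoduleP modW x Ux).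
pose Mv := \matrix_(i < k.+1) (w0 *m X ^+ i).
have MvW : (Mv <= W)%MS by apply/row_subP => i; rewrite rowK.
have nfree : ~~ row_free Mv.
  rewrite /row_free; apply/negP => /eqP r.
  by have := mxrankS MvW; rewrite r -/k ltnn.
have nzK : kermx Mv != 0 by rewrite kermx_eq0.
have [c cK nzc] := rowV0Pn nzK.
have cMv : c *m Mv = 0 by apply/sub_kermxP.
exists (rVpoly c); split.
- apply: contraNneq nzc => h; by rewrite -[c]rVpolyK h linear0.
- exact: size_poly.
set Q := horner_mx X (rVpoly c).
have w0Q : w0 *m Q = 0.
  rewrite -cMv [c *m Mv]mulmx_sum_row /Q [rVpoly c]poly_def linear_sum /= mulmx_sumr.
  apply: eq_bigr => i _; rewrite valK /= linearZ /= rmorphXn /= horner_mx_X.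
  by rewrite -scalemxAr rowK.
have EQ : (Q \in E)%MS by apply: env_horner.
apply: transport => //.
have modK : mxmodule rU (kermx Q).
  apply/mxmoduleP => y Uy; rewrite sub_kermx -mulmxA.
  have -> : rU y *m Q = Q *m rU y.
    by apply: comm_mx_horner; rewrite /comm_mx /= rGcomm.
  by rewrite mulmxA mulmx_ker mul0mx.
apply/sub_kermxP; apply: submx_trans (capmxSr W _).
apply: simW'; [exact: capmx_module | exact: capmxSl |].
by apply/rowV0Pn; exists w0 => //; rewrite sub_capmx w0W; apply/sub_kermxP.
Qed.


Lemma uniq_roots_rG (s : seq gT) : uniq s -> {subset s <= U} ->
  uniq_roots (map rG s).
Proof.
elim: s => [//|a s IH] /= /andP[nas us] sU.
have Ua : a \in U by apply: sU; rewrite inE eqxx.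
rewrite IH ?andbT //; last by move=> y ys; apply: sU; rewrite inE ys orbT.
rewrite all_map; apply/allP => y ys /=.
have Uy : y \in U by apply: sU; rewrite inE ys orbT.
have Gy := subsetP sUG y Uy; have Ga := subsetP sUG a Ua.
rewrite /diff_roots -mulmxE rGcomm // eqxx /=.
have -> : rG y - rG a = (rG (y * a^-1)%g - 1%:M) *m rG a.
  by rewrite mulmxBl mul1mx repr_mxM ?groupV // -mulmxA -repr_mxM ?groupV // mulVg repr_mx1 mulmx1.
rewrite unitmx_mul repr_mx_unit // andbT unit_diff ?groupM ?groupV //.
apply: contraNneq nas => /eqP; rewrite mulg_eq1 ?invgK => /eqP <-.
by [].
Qed.

Lemma class_bound x : x \in U -> (G0 \subset 'N(U))%g ->
  (#|(x ^: G0)%g| <= \rank W)%N.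
Proof.
move=> Ux nUG.
have [P [nzP szP hP]] := Pexists Ux.
have Gx := subsetP sUG x Ux.
have rootY : forall y, y \in (x ^: G0)%g -> horner_mx (rG y) P = 0.
  move=> y /imsetP[g Gg ->]; rewrite conjgE !repr_mxM ?groupV ?groupM //.
  by rewrite repr_mxV // mulmxA horner_mx_uconjC ?repr_mx_unit // hP mulmx0 mul0mx.
have CU : {subset (x ^: G0)%g <= U}.
  move=> y /imsetP[g Gg ->]; by rewrite memJ_norm // (subsetP nUG).
have := @max_ring_poly_roots _ (map_poly (@scalar_mx F n.+1) P)
   (map rG (enum (x ^: G0)%g)).
rewrite map_poly_eq0 nzP size_map_poly size_map -cardE => H.
have /H {}H : all (root (map_poly (@scalar_mx F n.+1) P)) (map rG (enum (x ^: G0)%g)).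
  rewrite all_map; apply/allP => y; rewrite mem_enum => yC /=.
  by have := rootY y yC; rewrite /root /horner_mx /horner_morph => ->.
have /H {}H : uniq_roots (map rG (enum (x ^: G0)%g)).
  by apply: uniq_roots_rG; [apply: enum_uniq | move=> y; rewrite mem_enum; apply: CU].
by rewrite -ltnS (leq_trans (H isT)).
Qed.

End Core.

Section Count.
Lemma orbit_count (aT : finGroupType) (D : {group aT}) (T : finType)
  (to : action D T) (t0 : T) :
  (forall a, a \in D -> to t0 a = t0) ->
  (#|T| <= 1 + (#|[set orbit to D v | v : T]| - 1) * #|D|)%N.
Proof.
move=> fix0.
set P := [set orbit to D v | v : T].
have partP : partition P [set: T].
  have := @orbit_partition _ _ _ to D [set: T].
  have -> : [set orbit to D x | x in [set: T]] = P.
    by apply/setP => O; apply/imsetP/imsetP => -[v _ ->]; exists v.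
  apply; apply/subsetP => a Da; rewrite !inE Da /=; apply/subsetP => x _; by rewrite !inE.
have P0 : orbit to D t0 \in P by apply: imset_f.
have O0 : orbit to D t0 = [set t0].
  apply/orbit1P; apply/afixP => b Db; exact: fix0.
have -> : #|T| = #|[set: T]| by rewrite cardsT.
rewrite (card_partition partP) (bigD1 _ P0) /= {1}O0 cards1 leq_add2l.
have -> : (#|P| - 1 = #|[pred O in P | O != orbit to D t0]|)%N.
  rewrite (cardD1 (orbit to D t0)) P0 add1n subn1 /=; apply: eq_card => O; by rewrite !inE andbC.
rewrite -sum_nat_const; apply: leq_sum => O /andP[/imsetP[v _ ->] _].
exact: leq_imset_card.
Qed.

Lemma idxE (gT : finGroupType) s (Es : 'I_s -> {group gT}) (q m : 'I_s -> nat)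
  (E : {group gT}) : (forall i, prime (q i)) ->
  (forall i, (q i).-group%g (Es i)) -> (forall i, extraspecial (Es i)) ->
  (forall i, #|Es i| = q i ^ (2 * m i + 1))%N ->
  (\big[dprod/1]_(i < s) Es i = E)%g ->
  #|E : 'Z(E)%g|%g = ((\prod_(i < s) q i ^ m i) ^ 2)%N.
Proof.
move=> qP qG esE cardE defE.
have cE := bigdprod_card defE.
have cZ := bigdprod_card (center_bigdprod defE).
have L := Lagrange (center_sub E).
have eZ : (\prod_(i < s) #|'Z(Es i)%g| = \prod_(i < s) q i)%N.
  by apply: eq_bigr => i _; rewrite (card_center_extraspecial (qG i) (esE i)).
have eE : (\prod_(i < s) #|Es i| = (\prod_(i < s) q i ^ m i) ^ 2 * \prod_(i < s) q i)%N.
  rewrite (_ : ((\prod_(i < s) q i ^ m i) ^ 2 = \prod_(i < s) (q i ^ m i) ^ 2)%N).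
    rewrite -big_split /=; apply: eq_bigr => i _.
    by rewrite cardE expnD expn1 mulnC expnAC -expnM mulnC.
  by rewrite !expnS !expn0 !muln1 big_split.
have pos : (0 < \prod_(i < s) q i)%N.
  by rewrite prodn_gt0 // => i; exact: prime_gt0.
have H : (#|'Z(E)%g| * #|E : 'Z(E)%g|%g = #|'Z(E)%g| * (\prod_(i < s) q i ^ m i) ^ 2)%N.
  by rewrite L -cE eE -cZ eZ mulnC.
by apply/eqP; rewrite -(eqn_pmul2l (cardG_gt0 'Z(E)%G)) H.
Qed.

End Count.

Section LogS.
Lemma log2_ge_stdlib (p k : nat) : (1 < p)%N -> Rle (INR k) (log2 (INR (p ^ k)%N)).
Proof.
move=> p1.
have Hp : Rle 2 (INR p).
  have : (2 <= p)%coq_nat by apply/leP.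
  by move/le_INR; rewrite /= .
have l2 : Rlt 0 (ln 2) by have := ln_lt_2; lra.
have lp : Rle (ln 2) (ln (INR p)).
  case: (Rle_lt_or_eq_dec _ _ Hp) => h; last by rewrite -h; apply: Rle_refl.
  by apply: Rlt_le; apply: ln_increasing => //; lra.
have e : forall j, INR (p ^ j)%N = pow (INR p) j.
  elim=> [|j IH] //; rewrite expnS -multE mult_INR IH //.
rewrite /log2 e ln_pow; last by lra.
have k0 : Rle 0 (INR k) by apply: pos_INR.
apply (Rmult_le_reg_r (ln 2)) => //.
rewrite /Rdiv Rmult_assoc Rinv_l; last by lra.
rewrite Rmult_1_r; by apply: Rmult_le_compat_l.
Qed.

Lemma log2_ge (p k : nat) : (1 < p)%N -> ((k%:R : R) <= log2 (p ^ k)%N%:R)%R.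
Proof. move=> p1; rewrite -!INRE; apply/RleP; exact: log2_ge_stdlib. Qed.

End LogS.
End Helpers.
Unset Implicit Arguments.
Set Strict Implicit.

Local Open Scope group_scope.


Theorem proposition2p3 (p d : nat) (gT : finGroupType) (G0 : {group gT})
  (rG : mx_representation 'F_p G0 d)
  (U F A E : {group gT}) (s : nat) (Es : 'I_s -> {group gT}) (q m : 'I_s -> nat)
  (W : 'M['F_p]_d) (sUG : U \subset G0) :
  prime p -> mx_faithful rG -> solvable G0 ->
  mx_irreducible rG -> mx_quasi_primitive rG ->
  (* Z(E) <= U <= F <= A <= G0, all normal in G0; E char F *)
  'Z(E) \subset U -> U \subset F -> F \subset A -> A \subset G0 ->
  ('Z(E) <| G0)%g -> (U <| G0)%g -> (F <| G0)%g -> (A <| G0)%g -> (E \char F)%g ->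
  (* (i) *)
  (E \* U)%g = F -> E :&: U = 'Z(E) ->
  (* (ii) *)
  (F / U)%g \isog (E / 'Z(E))%g -> compl_reducible_quo G0 E ->
  (* (iii) *)
  (forall i, prime (q i)) -> injective q -> (forall i, 0 < m i)%N ->
  (forall i, (q i).-group (Es i)) -> (forall i, extraspecial (Es i)) ->
  (forall i, #|Es i| = q i ^ (2 * m i + 1))%N ->
  \big[dprod/1%g]_(i < s) Es i = E ->
  let e := (\prod_(i < s) q i ^ m i)%N in
  (e %| d)%N -> coprime p e ->
  (* (iv) *)
  A = 'C_G0(U) ->
  [set a in A | [forall x in E, [~ x, a] \in 'Z(E)]] \subset F ->
  (* (v) *)
  cyclic U -> mxsimple (subg_repr rG sUG) W ->
  (forall u, u \in U -> u != 1%g ->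
     forall w : 'rV['F_p]_d, (w <= W)%MS -> (w *m rG u)%R = w -> w = 0%R) ->
  (* (vi), (vii) *)
  let k := \rank W in
  (#|U| %| p ^ k - 1)%N ->
  (exists b : nat, d = (b * k * e)%N) ->
  let sW := (p ^ k)%N in
  (Num.ceil (((sW ^ e)%:R - 1) /
       (log2 sW%:R * #|A : F|%:R * (e ^ 2)%:R * (sW%:R - 1)) : R) + 1
     <= (affine_rank rG)%:Z)%R.
Proof.
case: d rG W => [|n] rG W.
  by move=> _ _ _ /mx_irrP[].
move=> pP faith solv irr qprim sZU sUF sFA sAG nZ nU nF nA chE defF EU isoFE crq
  qP qinj mpos qG esE cardE defE e de cpe defA faithA cycU simW fpf k dvdU [b db].
cbv zeta; set sW := (p ^ k)%N.
have homU := qprim U sUG nU.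
have abU := cyclic_abelian cycU.
have nUG := normal_norm nU.
have [x defU] := cyclicP cycU.
have Ux : x \in U by rewrite defU cycle_id.
have idxA : (#|G0 : A| <= k)%N.
  have eA : (A : {set gT}) = 'C_G0[x] by rewrite defA /= defU cent_cycle.
  rewrite eA index_cent1.
  exact: (class_bound homU abU simW fpf Ux nUG).
have p1 : (1 < p)%N by apply: prime_gt1.
have k0 : (0 < k)%N by rewrite lt0n mxrank_eq0; case: simW.
have sW1 : (1 < sW)%N by rewrite /sW -(expn0 p) ltn_exp2l.
have cU : (#|U| <= sW - 1)%N by apply: dvdn_leq => //; rewrite subn_gt0.
have idxFU : #|F : U| = (e ^ 2)%N.
  rewrite -card_quotient; last exact: subset_trans (subset_trans sFA sAG) nUG.
  rewrite (card_isog isoFE) card_quotient; last exact: normal_norm (center_normal E).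
  exact: idxE qP qG esE cardE defE.
have cG0 : (#|G0| <= k * #|A : F| * e ^ 2 * (sW - 1))%N.
  rewrite -(Lagrange sAG) -(Lagrange sFA) -(Lagrange sUF) idxFU.
  apply: leq_trans (leq_mul (leq_mul (leq_mul cU (leqnn (e ^ 2))) (leqnn #|A : F|)) idxA) _.
  apply: eq_leq; ring.
have fix0 : forall a, a \in G0 -> ('MR rG)%act (0%R : 'rV['F_p]_n.+1) a = 0%R.
  by move=> a Ga; rewrite /= mx_repr_actE // mul0mx.
have oc := orbit_count fix0.
rewrite card_mx card_Fp // mul1n in oc.
rewrite /affine_rank; set r := #|_|.
have {}oc : (p ^ n.+1 <= 1 + (r - 1) * #|G0|)%N := oc.
have b0 : (0 < b)%N by case: b db.
have H3 : (sW ^ e <= p ^ n.+1)%N.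
  rewrite /sW -expnM db; apply: leq_pexp2l; first exact: prime_gt0.
  by rewrite -mulnA leq_pmull.
have pd2 : (1 < p ^ n.+1)%N.
  apply: leq_trans p1 _; rewrite -{1}(expn1 p) leq_pexp2l //; exact: prime_gt0.
have r1 : (1 <= r)%N.
  rewrite lt0n; apply/eqP => r0; rewrite r0 sub0n mul0n addn0 in oc.
  by rewrite leqNgt pd2 in oc.
set M := (k * #|A : F| * e ^ 2 * (sW - 1))%N.
have hnum : (sW ^ e <= 1 + (r - 1) * M)%N.
  apply: leq_trans H3 (leq_trans oc _); by rewrite leq_add2l leq_mul.
have e0 : (0 < e)%N.
  apply: prodn_gt0 => i. by rewrite ssrnat.expn_gt0 (prime_gt0 (qP i)).
have AF0 : (0 < #|A : F|)%N by [].
have M0 : (0 < M)%N.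
  by rewrite /M !muln_gt0 k0 AF0 e0 subn_gt0 sW1.
have -> : ((r%:Z) = (r - 1)%N%:Z + 1)%R by rewrite -PoszD subnK.
rewrite lerD2r Num.Theory.ceil_le_int.
have hD : ((M%:R : R) <= log2 sW%:R * #|A : F|%:R * (e ^ 2)%:R * (sW%:R - 1))%R.
  rewrite /M; set e2 := (e ^ 2)%N; rewrite !natrM natrB; last exact: ltnW.
  rewrite mulr1n; apply: ler_wpM2r; first by rewrite subr_ge0 ler1n ltnW.
  apply: ler_wpM2r; first by rewrite mulr_ge0 ?ler0n.
  apply: ler_wpM2r; first exact: ler0n.
  exact: log2_ge.
have Dpos : (0 < log2 sW%:R * #|A : F|%:R * (e ^ 2)%:R * (sW%:R - 1) :> R)%R.
  by apply: Order.POrderTheory.lt_le_trans hD; rewrite ltr0n.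
rewrite ler_pdivrMr // -pmulrn.
apply: Order.POrderTheory.le_trans (_ : _ <= ((r - 1) * M)%N%:R)%R _; last first.
  by rewrite natrM; apply: ler_wpM2l => //; exact: ler0n.
have h : ((sW ^ e)%:R <= (1 + (r - 1) * M)%N%:R :> R)%R by rewrite ler_nat.
rewrite lerBlDl; apply: Order.POrderTheory.le_trans h _; by rewrite natrD mulr1n.
Qed.
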